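(* Let $(r_k)_{k\in\mathbb{N}}$ be a sequence of nonnegative reals with $r_1=1$, $\sum_{k=1}^\infty r_k<\infty$, such that $r_i=0$ implies $r_j=0$ for all $j\geq i$, and suppose there is a constant $c_0>0$ with $\sum_{k=M}^\infty r_k\leq c_0/M$ for all integers $M\geq2$. Let $g:[1,\infty)\to[0,\infty)$ be a continuous, strictly decreasing function with $\sum_{i=M}^\infty r_i\leq g(M)$ for all integers $M\ge2$ and $g(s)\leq c_0/s$ for all $s\in[1,\infty)$. Fix $d\ge1$ and a discrete probability measure $\mu=\sum_{i=1}^\infty\alpha_i\delta_{y_i}$ on $[0,1]^d$ ($y_i\in[0,1]^d$, $\alpha_i\ge0$, $\sum_i\alpha_i=1$, $\alpha_1>0$) with $\alpha_k\leq r_k\alpha_1$ for all $k$. Then for every integer $N\geq2$ such that $\frac{1}{N\alpha_1}$ lies in the range of $g$, there exist points $x_1^N,\dots,x_N^N\in[0,1]^d$ such that $\nu_N=\frac1N\sum_{i=1}^N\delta_{x_i^N}$ satisfies $$\rho(\mu;\nu_N)<(6c_0+3)\,\frac{g^{-1}\!\left(\frac{1}{N\alpha_1}\right)}{N}.$$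
   Context: $\delta_y$ denotes the Dirac measure at $y$. For probability measures $\mu,\nu$ on $[0,1]^d$, the total variation distance is $\rho(\mu;\nu)=\sup_{A}|\mu(A)-\nu(A)|$, the supremum taken over all Borel sets $A\subseteq[0,1]^d$. $g^{-1}$ denotes the inverse function of $g$. *)

(* Defs.v *)
From Stdlib Require Import Reals Lra List.
Open Scope R_scope.

(* Points of R^d are lists of length d; [in_cube d p] means p ∈ [0,1]^d. *)
Definition in_cube (d : nat) (p : list R) : Prop :=
  length p = d /\ Forall (fun t => 0 <= t <= 1) p.

(* A subset A of [0,1]^d is given by its (boolean) characteristic function. *)
Definition ind (A : list R -> bool) (p : list R) : R := if A p then 1 else 0.

Definition disc_measure_val (alpha : nat -> R) (y : nat -> list R)
  (A : list R -> bool) (m : R) : Prop :=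
  infinite_sum (fun i => alpha (S i) * ind A (y (S i))) m.

Definition empirical_val (N : nat) (x : nat -> list R) (A : list R -> bool) : R :=
  / INR N * sum_f_R0 (fun i => ind A (x (S i))) (N - 1).

(* rho = total variation distance sup_A |mu(A) - nu_N(A)|. *)
Definition is_tv_dist (alpha : nat -> R) (y : nat -> list R) (N : nat)
  (x : nat -> list R) (rho : R) : Prop :=
  is_lub (fun v => exists (A : list R -> bool) (m : R),
             disc_measure_val alpha y A m /\ v = Rabs (m - empirical_val N x A)) rho.

Definition continuous_on_ge1 (g : R -> R) : Prop :=
  forall s, 1 <= s -> forall eps, 0 < eps -> exists delta, 0 < delta /\
    forall t, 1 <= t -> Rabs (t - s) < delta -> Rabs (g t - g s) < eps.

(* Main.v *)
Require Import Defs.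
From Stdlib Require Import Reals Lra Lia List ZArith.
Open Scope R_scope.

Definition nfloor (x:R) : nat := Z.to_nat (Int_part x).

Lemma nfloor_spec x : 0 <= x -> INR (nfloor x) <= x < INR (nfloor x) + 1.
Proof.
  intros Hx. destruct (base_Int_part x) as [H1 H2].
  assert (Hz : (0 <= Int_part x)%Z).
  { apply Z.lt_succ_r. apply lt_IZR. rewrite succ_IZR. lra. }
  unfold nfloor. rewrite INR_IZR_INZ, Z2Nat.id by exact Hz. lra.
Qed.

Fixpoint ssum (f : nat -> R) (n : nat) : R :=
  match n with O => 0 | S n' => ssum f n' + f n end.
Fixpoint nsum (f : nat -> nat) (n : nat) : nat :=
  match n with O => O | S n' => (nsum f n' + f n)%nat end.
Fixpoint blkfind (C : nat -> nat) (j k : nat) : nat :=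
  match k with
  | O => 1%nat
  | S k' => if (j <=? C k')%nat then blkfind C j k'
            else if (j <=? C (S k'))%nat then S k' else 1%nat
  end.

Lemma ssum_add f a b : ssum f (a+b) = ssum f a + ssum (fun t => f (a+t)%nat) b.
Proof.
  induction b; simpl. rewrite Nat.add_0_r; ring.
  rewrite Nat.add_succ_r. simpl. rewrite IHb. ring.
Qed.

Lemma sum_f_R0_ssum f n : sum_f_R0 (fun i => f (S i)) n = ssum f (S n).
Proof. induction n; simpl. ring. rewrite IHn. simpl. ring. Qed.

Lemma ssum_le f g n : (forall i, (1<=i<=n)%nat -> f i <= g i) -> ssum f n <= ssum g n.
Proof.
  induction n; intros H; simpl. lra.
  assert (ssum f n <= ssum g n) by (apply IHn; intros; apply H; lia).
  assert (f (S n) <= g (S n)) by (apply H; lia). lra.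
Qed.

Lemma ssum_ext f g n : (forall i, (1<=i<=n)%nat -> f i = g i) -> ssum f n = ssum g n.
Proof.
  induction n; intros H; simpl. lra.
  rewrite IHn by (intros; apply H; lia). rewrite H by lia. ring.
Qed.

Lemma ssum_const c n : ssum (fun _ => c) n = INR n * c.
Proof. induction n; simpl ssum. simpl; ring. rewrite IHn, S_INR. ring. Qed.

Lemma ssum_nonneg f n : (forall i, (1<=i<=n)%nat -> 0 <= f i) -> 0 <= ssum f n.
Proof.
  intros H. replace 0 with (ssum (fun _ => 0) n).
  apply ssum_le; auto. rewrite ssum_const; ring.
Qed.

Lemma nsum_INR f n : INR (nsum f n) = ssum (fun i => INR (f i)) n.
Proof. induction n; simpl. reflexivity. rewrite plus_INR, IHn. reflexivity. Qed.

Lemma nsum_mono f m n : (m <= n)%nat -> (nsum f m <= nsum f n)%nat.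
Proof. induction 1; simpl; lia. Qed.

Lemma find_after C j k : (forall a b, (a <= b)%nat -> (C a <= C b)%nat) ->
  (C k < j)%nat -> blkfind C j k = 1%nat.
Proof.
  intros HC H. destruct k; simpl. reflexivity.
  assert (C k <= C (S k))%nat by (apply HC; lia).
  destruct (Nat.leb_spec j (C k)); [lia|].
  destruct (Nat.leb_spec j (C (S k))); [lia|reflexivity].
Qed.

Lemma find_block C j k K : (forall a b, (a <= b)%nat -> (C a <= C b)%nat) ->
  (C k < j <= C (S k))%nat -> (S k <= K)%nat -> blkfind C j K = S k.
Proof.
  intros HC Hj. induction K; intros HK. lia.
  simpl. destruct (Nat.eq_dec k K) as [->|Hne].
  - destruct (Nat.leb_spec j (C K)); [lia|].
    destruct (Nat.leb_spec j (C (S K))); [reflexivity|lia].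
  - assert (C (S k) <= C K)%nat by (apply HC; lia).
    destruct (Nat.leb_spec j (C K)); [apply IHK; lia|lia].
Qed.

Lemma lim_le (u : nat -> R) l K b : infinite_sum u l ->
  (forall n, sum_f_R0 u (K+n) <= b) -> l <= b.
Proof.
  intros Hl H. destruct (Rle_dec l b) as [|Hn]; auto.
  destruct (Hl (l - b)) as [N0 HN]. lra.
  specialize (HN (K+N0)%nat ltac:(lia)). specialize (H N0).
  unfold Rdist in HN. apply Rabs_def2 in HN. lra.
Qed.

Lemma lim_ge (u : nat -> R) l K a : infinite_sum u l ->
  (forall n, a <= sum_f_R0 u (K+n)) -> a <= l.
Proof.
  intros Hl H. destruct (Rle_dec a l) as [|Hn]; auto.
  destruct (Hl (a - l)) as [N0 HN]. lra.
  specialize (HN (K+N0)%nat ltac:(lia)). specialize (H N0).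
  unfold Rdist in HN. apply Rabs_def2 in HN. lra.
Qed.

Lemma partial_le_lim f l n : infinite_sum (fun i => f (S i)) l ->
  (forall i, (1<=i)%nat -> 0 <= f i) -> ssum f n <= l.
Proof.
  intros Hl Hf. apply (lim_ge (fun i => f (S i)) l n). exact Hl. intros k.
  rewrite sum_f_R0_ssum. replace (S (n+k)) with (n + S k)%nat by lia.
  rewrite ssum_add. assert (0 <= ssum (fun t => f (n+t)%nat) (S k)).
  apply ssum_nonneg. intros; apply Hf; lia. lra.
Qed.

Lemma find_ge1 C j k : (1 <= blkfind C j k)%nat.
Proof.
  induction k; simpl. lia.
  destruct (j <=? C k)%nat; auto. destruct (j <=? C (S k))%nat; lia.
Qed.

Lemma ssum_lin a b f g n :
  ssum (fun i => a * f i + b * g i) n = a * ssum f n + b * ssum g n.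
Proof. induction n; simpl. ring. rewrite IHn. ring. Qed.

Lemma ind_bounds A p : 0 <= Defs.ind A p <= 1.
Proof. unfold Defs.ind; destruct (A p); lra. Qed.

Lemma block_sum (fl : nat -> nat) (yy : nat -> R) K k : (k <= K)%nat ->
  ssum (fun j => yy (blkfind (nsum fl) j K)) (nsum fl k) = ssum (fun i => INR (fl i) * yy i) k.
Proof.
  induction k; intros Hk. reflexivity.
  simpl nsum. rewrite ssum_add. rewrite IHk by lia. change (ssum (fun i => INR (fl i) * yy i) (S k)) with (ssum (fun i => INR (fl i) * yy i) k + INR (fl (S k)) * yy (S k)).
  rewrite (ssum_ext (fun t => yy (blkfind (nsum fl) (nsum fl k + t) K)) (fun _ => yy (S k))).
  rewrite ssum_const. ring.
  intros t Ht. rewrite (find_block (nsum fl) _ k K); auto.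
  intros; apply nsum_mono; auto. simpl. lia.
Qed.

Lemma rest_sum (fl : nat -> nat) (yy : nat -> R) K N : (nsum fl K <= N)%nat ->
  ssum (fun j => yy (blkfind (nsum fl) j K)) N =
  ssum (fun i => INR (fl i) * yy i) K + INR (N - nsum fl K) * yy 1%nat.
Proof.
  intros H. replace N with (nsum fl K + (N - nsum fl K))%nat at 1 by lia.
  rewrite ssum_add, block_sum by lia. f_equal.
  rewrite (ssum_ext _ (fun _ => yy 1%nat)). apply ssum_const.
  intros t Ht. rewrite find_after; auto. intros; apply nsum_mono; auto. lia.
Qed.

Lemma infinite_sum_ext f g l : (forall i, f i = g i) -> infinite_sum f l -> infinite_sum g l.
Proof.
  intros H Hf eps He. destruct (Hf eps He) as [N0 HN]. exists N0. intros n Hn.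
  rewrite <- (sum_eq f g n) by auto. auto.
Qed.

Theorem theorem2p3
  (r : nat -> R) (c0 : R) (g : R -> R) (d : nat)
  (alpha : nat -> R) (y : nat -> list R)
  (Hr_nonneg : forall k, (1 <= k)%nat -> 0 <= r k)
  (Hr1 : r 1%nat = 1)
  (Hr_sum : exists l, infinite_sum (fun k => r (S k)) l)
  (Hr_zero : forall i j, (1 <= i)%nat -> (i <= j)%nat -> r i = 0 -> r j = 0)
  (Hc0 : 0 < c0)
  (Hr_tail : forall M : nat, (2 <= M)%nat -> forall t,
      infinite_sum (fun k => r (M + k)%nat) t -> t <= c0 / INR M)
  (Hg_nonneg : forall s, 1 <= s -> 0 <= g s)
  (Hg_cont : continuous_on_ge1 g)
  (Hg_decr : forall s t, 1 <= s -> s < t -> g t < g s)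
  (Hg_tail : forall M : nat, (2 <= M)%nat -> forall t,
      infinite_sum (fun k => r (M + k)%nat) t -> t <= g (INR M))
  (Hg_bound : forall s, 1 <= s -> g s <= c0 / s)
  (Hd : (1 <= d)%nat)
  (Hy : forall i, (1 <= i)%nat -> in_cube d (y i))
  (Halpha_nonneg : forall i, (1 <= i)%nat -> 0 <= alpha i)
  (Halpha_sum : infinite_sum (fun i => alpha (S i)) 1)
  (Halpha1 : 0 < alpha 1%nat)
  (Halpha_r : forall k, (1 <= k)%nat -> alpha k <= r k * alpha 1%nat) :
  forall (N : nat), (2 <= N)%nat ->
  forall s, 1 <= s -> g s = / (INR N * alpha 1%nat) ->
  exists x : nat -> list R,
    (forall i, (1 <= i <= N)%nat -> in_cube d (x i)) /\
    exists rho, is_tv_dist alpha y N x rho /\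
      rho < (6 * c0 + 3) * (s / INR N).
Proof.
  intros N HN s Hs Hgs.
  assert (HNpos : 0 < INR N) by (apply lt_0_INR; lia).
  set (K := nfloor s).
  destruct (nfloor_spec s ltac:(lra)) as [HK1 HK2]. fold K in HK1, HK2.
  assert (HK : (1 <= K)%nat).
  { destruct K as [|k]; [simpl in HK2; lra | lia]. }
  set (fl := fun i => if (i <=? 1)%nat then 0%nat else nfloor (INR N * alpha i)).
  assert (Hfl1 : forall i, (1 <= i)%nat -> INR (fl i) <= INR N * alpha i).
  { intros i Hi. unfold fl. destruct (Nat.leb_spec i 1).
    simpl. apply Rmult_le_pos; [lra|apply Halpha_nonneg; lia].
    apply nfloor_spec. apply Rmult_le_pos; [lra|apply Halpha_nonneg; lia]. }
  assert (Hfl2 : forall i, (2 <= i)%nat -> INR N * alpha i < INR (fl i) + 1).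
  { intros i Hi. unfold fl. destruct (Nat.leb_spec i 1). lia.
    apply nfloor_spec. apply Rmult_le_pos; [lra|apply Halpha_nonneg; lia]. }
  assert (Hfl0 : fl 1%nat = 0%nat) by reflexivity.
  set (C := nsum fl).
  assert (Hpart : forall n, ssum alpha n <= 1).
  { intros n. apply partial_le_lim; auto. }
  assert (Hdiv : forall a b, a <= INR N * b -> a / INR N <= b).
  { intros a b H. replace b with (INR N * b / INR N) by (field; lra).
    unfold Rdiv. apply Rmult_le_compat_r; [left; apply Rinv_0_lt_compat; lra|lra]. }
  assert (Hdiv2 : forall a b, INR N * b < a + 1 -> b - a / INR N < / INR N).
  { intros a b H. replace b with (INR N * b / INR N) by (field; lra).
    replace (INR N * b / INR N - a / INR N) with ((INR N * b - a) * / INR N) by (field; lra).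
    rewrite <- (Rmult_1_l (/ INR N)) at 2.
    apply Rmult_lt_compat_r; [apply Rinv_0_lt_compat; lra|lra]. }
  assert (HCK : (C K <= N)%nat).
  { apply INR_le. unfold C. rewrite nsum_INR.
    apply Rle_trans with (ssum (fun i => INR N * alpha i + 0 * alpha i) K).
    apply ssum_le. intros i Hi. specialize (Hfl1 i ltac:(lia)). lra.
    rewrite ssum_lin. specialize (Hpart K). nra. }
  set (rt := fun t => r (K + t)%nat).
  destruct Hr_sum as [l0 Hl0].
  destruct (growing_cv (sum_f_R0 (fun i => rt (S i)))) as [tr Htr].
  { intros n. simpl. assert (0 <= rt (S (S n))) by (apply Hr_nonneg; lia). lra. }
  { exists l0. intros v [i ->]. rewrite sum_f_R0_ssum.
    assert (H1 := partial_le_lim r l0 (K + S i) Hl0 Hr_nonneg).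
    rewrite ssum_add in H1.
    assert (0 <= ssum r K) by (apply ssum_nonneg; intros; apply Hr_nonneg; lia).
    unfold rt. lra. }
  assert (Htr' : infinite_sum (fun i => rt (S i)) tr) by exact Htr.
  assert (HtrG : tr <= g (INR (S K))).
  { apply Hg_tail. lia. apply (infinite_sum_ext (fun i => rt (S i))); auto.
    intros i. unfold rt. f_equal. lia. }
  assert (HgK : g (INR (S K)) < g s).
  { apply Hg_decr; auto. rewrite S_INR; lra. }
  assert (Hag : alpha 1%nat * g s = / INR N).
  { rewrite Hgs. field. split; lra. }
  set (T := 1 - ssum alpha K).
  assert (HT0 : 0 <= T) by (unfold T; specialize (Hpart K); lra).
  assert (HTtr : T <= alpha 1%nat * tr).
  { unfold T. enough (1 <= ssum alpha K + alpha 1%nat * tr) by lra.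
    apply (lim_le _ _ K _ Halpha_sum). intros n.
    rewrite sum_f_R0_ssum. replace (S (K + n)) with (K + S n)%nat by lia.
    rewrite ssum_add.
    assert (ssum (fun t => alpha (K + t)%nat) (S n) <= alpha 1%nat * tr); [|lra].
    apply Rle_trans with (ssum (fun t => alpha 1%nat * rt t + 0 * rt t) (S n)).
    apply ssum_le. intros i Hi. unfold rt. specialize (Halpha_r (K+i)%nat ltac:(lia)). lra.
    rewrite ssum_lin. rewrite <- sum_f_R0_ssum.
    assert (sum_f_R0 (fun i => rt (S i)) n <= tr).
    { rewrite sum_f_R0_ssum. apply partial_le_lim; auto. intros; unfold rt; apply Hr_nonneg; lia. }
    rewrite sum_f_R0_ssum. rewrite sum_f_R0_ssum in H. nra. }
  assert (HTN : T <= / INR N).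
  { assert (0 <= tr).
    { apply (lim_ge _ _ 0 _ Htr'). intros n. rewrite sum_f_R0_ssum.
      apply ssum_nonneg. intros; unfold rt; apply Hr_nonneg; lia. }
    rewrite <- Hag. nra. }
  set (E := 1 - alpha 1%nat - INR (C K) / INR N).
  set (Z' := ssum (fun t => alpha (1 + t)%nat - INR (fl (1 + t)%nat) / INR N) (K - 1)).
  assert (HE : E = Z' + T).
  { unfold E, Z', T, C. rewrite nsum_INR.
    replace K with (1 + (K - 1))%nat at 1 3 by lia.
    rewrite !ssum_add.
    rewrite (ssum_ext (fun t => alpha (1 + t)%nat - INR (fl (1 + t)%nat) / INR N) (fun t => 1 * alpha (1+t)%nat + (- / INR N) * INR (fl (1+t)%nat)))
      by (intros; field; lra).
    rewrite ssum_lin. simpl ssum. field. lra. }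
  assert (HZ'0 : 0 <= Z').
  { apply ssum_nonneg. intros i Hi. specialize (Hdiv _ _ (Hfl1 (1+i)%nat ltac:(lia))). lra. }
  assert (HEK : E <= INR K / INR N).
  { rewrite HE.
    assert (Z' <= INR (K - 1) * / INR N).
    { rewrite <- ssum_const. apply ssum_le. intros i Hi. left. apply Hdiv2, Hfl2. lia. }
    rewrite minus_INR in H by lia. simpl INR in H. unfold Rdiv.
    replace (INR K * / INR N) with ((INR K - 1) * / INR N + / INR N) by ring. lra. }
  set (x := fun j => y (blkfind C j K)).
  exists x. split.
  { intros i Hi. apply Hy, find_ge1. }
  assert (Hmain : forall A m, disc_measure_val alpha y A m ->
             Rabs (m - empirical_val N x A) <= E).
  { intros A m Hm.
    set (yy := fun i => Defs.ind A (y i)).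
    set (P := ssum (fun i => alpha i * yy i) K).
    assert (HmP : P <= m).
    { apply (lim_ge _ _ K _ Hm). intros n.
      rewrite (sum_f_R0_ssum (fun i => alpha i * Defs.ind A (y i))).
      replace (S (K + n)) with (K + S n)%nat by lia. rewrite ssum_add.
      change (ssum (fun i => alpha i * Defs.ind A (y i)) K) with P.
      assert (0 <= ssum (fun t => alpha (K + t)%nat * Defs.ind A (y (K + t)%nat)) (S n)); [|lra].
      apply ssum_nonneg. intros i Hi. apply Rmult_le_pos. apply Halpha_nonneg; lia.
      apply ind_bounds. }
    assert (HmT : m <= P + T).
    { apply (lim_le _ _ K _ Hm). intros n.
      rewrite (sum_f_R0_ssum (fun i => alpha i * Defs.ind A (y i))).
      replace (S (K + n)) with (K + S n)%nat by lia. rewrite ssum_add.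
      change (ssum (fun i => alpha i * Defs.ind A (y i)) K) with P.
      assert (ssum (fun t => alpha (K + t)%nat * Defs.ind A (y (K + t)%nat)) (S n) <=
              ssum (fun t => alpha (K + t)%nat) (S n)).
      { apply ssum_le. intros i Hi. assert (H0 := ind_bounds A (y (K+i)%nat)).
        assert (0 <= alpha (K+i)%nat) by (apply Halpha_nonneg; lia). nra. }
      assert (H2 := Hpart (K + S n)%nat). rewrite ssum_add in H2. unfold T. lra. }
    assert (Hemp : empirical_val N x A =
       / INR N * (ssum (fun i => INR (fl i) * yy i) K + INR (N - C K) * yy 1%nat)).
    { unfold empirical_val. f_equal.
      rewrite (sum_f_R0_ssum (fun j => Defs.ind A (x j))).
      replace (S (N - 1)) with N by lia. unfold x, C. apply (rest_sum fl yy K N). exact HCK. }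
    rewrite Hemp. rewrite minus_INR by exact HCK.
    set (Z := ssum (fun t => (alpha (1 + t)%nat - INR (fl (1 + t)%nat) / INR N) * yy (1+t)%nat) (K - 1)).
    assert (HZ : 0 <= Z <= Z').
    { split. apply ssum_nonneg. intros i Hi.
      specialize (Hdiv _ _ (Hfl1 (1+i)%nat ltac:(lia))). assert (H0 := ind_bounds A (y (1+i)%nat)).
      change (yy (1+i)%nat) with (Defs.ind A (y (1+i)%nat)). nra.
      apply ssum_le. intros i Hi.
      specialize (Hdiv _ _ (Hfl1 (1+i)%nat ltac:(lia))). assert (H0 := ind_bounds A (y (1+i)%nat)).
      change (yy (1+i)%nat) with (Defs.ind A (y (1+i)%nat)). nra. }
    assert (HPQ : P - / INR N * ssum (fun i => INR (fl i) * yy i) K = alpha 1%nat * yy 1%nat + Z).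
    { unfold P, Z. replace K with (1 + (K - 1))%nat at 1 2 by lia.
      rewrite !ssum_add.
      rewrite (ssum_ext (fun t => (alpha (1 + t)%nat - INR (fl (1 + t)%nat) / INR N) * yy (1+t)%nat)
         (fun t => 1 * (alpha (1+t)%nat * yy (1+t)%nat) + (- / INR N) * (INR (fl (1+t)%nat) * yy (1+t)%nat)))
        by (intros; field; lra).
      rewrite ssum_lin. simpl ssum. field. lra. }
    assert (HEdef : E = 1 - alpha 1%nat - INR (C K) / INR N) by reflexivity.
    assert (HI : yy 1%nat = 0 \/ yy 1%nat = 1).
    { unfold yy, Defs.ind. destruct (A (y 1%nat)); auto. }
    assert (Hrel : / INR N * (ssum (fun i => INR (fl i) * yy i) K + (INR N - INR (C K)) * yy 1%nat)
              = / INR N * ssum (fun i => INR (fl i) * yy i) K + (1 - INR (C K) / INR N) * yy 1%nat)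
      by (field; lra).
    rewrite Hrel. apply Rabs_le.
    destruct HI as [HI|HI]; rewrite HI in *; split; nra. }
  set (S0 := fun v => exists (A : list R -> bool) (m : R),
             disc_measure_val alpha y A m /\ v = Rabs (m - empirical_val N x A)).
  destruct (completeness S0) as [rho Hrho].
  { exists E. intros v [A [m [Hm ->]]]. apply Hmain; auto. }
  { exists (Rabs (0 - empirical_val N x (fun _ => false))).
    exists (fun _ => false), 0. split; auto.
    intros eps He. exists 0%nat. intros n _.
    assert (sum_f_R0 (fun i => alpha (S i) * Defs.ind (fun _ => false) (y (S i))) n = 0).
    { induction n; simpl; unfold Defs.ind; simpl. ring. unfold Defs.ind in IHn; simpl in IHn. rewrite IHn. ring. }
    rewrite H. unfold Rdist. rewrite Rminus_0_r, Rabs_R0. lra. }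
  exists rho. split. exact Hrho.
  assert (rho <= E).
  { apply Hrho. intros v [A [m [Hm ->]]]. apply Hmain; auto. }
  assert (INR K / INR N <= s / INR N).
  { unfold Rdiv. apply Rmult_le_compat_r; [left; apply Rinv_0_lt_compat; lra|lra]. }
  assert (0 < s / INR N) by (apply Rdiv_lt_0_compat; lra).
  nra.
Qed.
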